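(* Let $n\ge 3$ and let $M_t$, $t\in(-\infty,0]$, be a noncompact ancient solution of mean curvature flow in $\mathbb{R}^{n+1}$ which is strictly convex, uniformly two-convex, noncollapsed, and rotationally symmetric about the $x_{n+1}$-axis, with cross-sectional radius $r(z,t)$, extinction times $\mathcal{T}(z)$ and constants $C_1,C_2$ as in the context. Then there is $R_0$ such that whenever $z<0$, $t<\mathcal{T}(z)$ and $r(z,t)\ge R_0$, \[2(n-1)\,[\mathcal{T}(z)-t] \leq r(z,t)^2 \leq 2(n-1)\,[\mathcal{T}(z)-t] + 8C_2[\mathcal{T}(z)-t]^{\frac{1}{4}}+C_1^2.\]
   Context: Strictly convex: positive definite second fundamental form; uniformly two-convex: $\lambda_1+\lambda_2\ge\beta H$ for some $\beta>0$; noncollapsed: each $M_t$ bounds a domain and each $x\in M_t$ is touched from inside by a ball of radius $\alpha/H(x,t)$ in that domain. $M_t$ is oriented so that its noncompact end points in the positive $x_{n+1}$-direction and normalized so that the tip of $M_0$ is the origin. $r(z,t)$ is the radius of the round sphere $M_t\cap\{x_{n+1}=z\}$ (where nonempty); it satisfies $r_t=\frac{r_{zz}}{1+r_z^2}-\frac{n-1}{r}$, and $r>0$, $r_z>0$, $r_t<0$, $r_{zz}<0$. For $z<0$, $\mathcal{T}(z)$ is defined by $r(z,t)>0$ for $t<\mathcal{T}(z)$ and $\lim_{t\to\mathcal{T}(z)}r(z,t)=0$. $C_1,C_2$ are constants such that $0\le -r_{zz}(z,t)\le C_2\, r(z,t)^{-5/2}$ whenever $r(z,t)\ge C_1$ (such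 constants exist for this class of solutions). *)

(* Defs.v *)
From Stdlib Require Import Reals.
From Coquelicot Require Import Coquelicot.
Open Scope R_scope.

Definition d_z (r : R -> R -> R) (z t : R) : R := Derive (fun w => r w t) z.
Definition d_zz (r : R -> R -> R) (z t : R) : R := Derive (fun w => d_z r w t) z.
Definition d_t (r : R -> R -> R) (z t : R) : R := Derive (fun s => r z s) t.

(* r is the radius profile of a rotationally symmetric mean curvature flow in
   R^{n+1}, defined for times t in (-oo,0]; the cross-section at height z is
   nonempty (a round sphere of positive radius) exactly where r z t > 0.
   On the (interior of the) region where it is defined, r is differentiable
   (twice in z), solves the radius equation of MCF, and satisfies
   r_z > 0, r_t < 0, r_zz < 0. *)
Definition mcf_radius_profile (n : nat) (r : R -> R -> R) : Prop :=
  forall z t, t < 0 -> 0 < r z t ->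
    ex_derive (fun w => r w t) z /\
    ex_derive (fun w => d_z r w t) z /\
    ex_derive (fun s => r z s) t /\
    d_t r z t = d_zz r z t / (1 + (d_z r z t) ^ 2) - (INR n - 1) / r z t /\
    0 < d_z r z t /\ d_t r z t < 0 /\ d_zz r z t < 0.

Definition extinction_time (r : R -> R -> R) (T : R -> R) : Prop :=
  forall z, z < 0 ->
    T z <= 0 /\
    (forall t, t < T z -> 0 < r z t) /\
    filterlim (fun t => r z t) (at_left (T z)) (locally 0).

Definition curvature_decay (r : R -> R -> R) (C1 C2 : R) : Prop :=
  forall z t, t < 0 -> 0 < r z t -> C1 <= r z t ->
    0 <= - d_zz r z t <= C2 * Rpower (r z t) (- (5 / 2)).

(* Main.v *)
Require Import Defs.
From Stdlib Require Import Reals Lra.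
From Coquelicot Require Import Coquelicot.
Open Scope R_scope.

Lemma mono_deriv (f df : R -> R) (a b : R) : a <= b ->
  (forall x, a <= x <= b -> is_derive f x (df x)) ->
  (forall x, a <= x <= b -> 0 <= df x) -> f a <= f b.
Proof.
  intros Hab Hd Hp.
  destruct (MVT_gen f a b df) as [c [Hc Heq]].
  - intros x Hx. rewrite Rmin_left in Hx by lra. rewrite Rmax_right in Hx by lra.
    apply Hd; lra.
  - intros x Hx. rewrite Rmin_left in Hx by lra. rewrite Rmax_right in Hx by lra.
    apply continuity_pt_filterlim. apply (ex_derive_continuous f x).
    exists (df x). apply Hd; lra.
  - rewrite Rmin_left in Hc by lra. rewrite Rmax_right in Hc by lra.
    assert (0 <= df c) by (apply Hp; lra). nra.
Qed.

Lemma lim_left (f : R -> R) a : filterlim f (at_left a) (locally 0) ->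
  forall eps, 0 < eps -> forall b, b < a -> exists y, b <= y < a /\ Rabs (f y) < eps.
Proof.
  intros H eps Heps b Hb.
  destruct (proj1 (filterlim_locally f 0) H (mkposreal eps Heps)) as [d Hd].
  exists (Rmax b (a - d/2)).
  assert (Hd2 : 0 < d) by (destruct d; simpl; lra).
  assert (b <= Rmax b (a - d / 2) < a).
  { split. apply Rmax_l. apply Rmax_lub_lt; lra. }
  split; auto.
  assert (Hball : ball a d (Rmax b (a - d / 2))).
  { change (Rabs (Rmax b (a - d / 2) - a) < d).
    rewrite Rabs_left by lra.
    assert (a - d/2 <= Rmax b (a - d / 2)) by apply Rmax_r. lra. }
  specialize (Hd _ Hball (proj2 H0)).
  change (Rabs (f (Rmax b (a - d / 2)) - 0) < eps) in Hd.
  rewrite Rminus_0_r in Hd. exact Hd.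
Qed.

Lemma exp_le' x y : x <= y -> exp x <= exp y.
Proof. intros [H|H]. left; apply exp_increasing; auto. subst; lra. Qed.

Lemma pow_ineq (rho u : R) : 0 < u -> u <= rho^2 -> 0 < rho ->
  rho * Rpower rho (-(5/2)) <= Rpower u (-(3/4)).
Proof.
  intros Hu Hle Hr. unfold Rpower.
  rewrite <- (exp_ln rho) at 1 by auto. rewrite <- exp_plus. apply exp_le'.
  assert (ln u <= ln (rho^2)) by (apply ln_le; auto).
  rewrite ln_pow in H by auto. simpl INR in H. lra.
Qed.

Lemma deriv_P (Tz x : R) : x < Tz ->
  is_derive (fun s => Rpower (Tz - s) (1/4)) x (- (1/4 * Rpower (Tz - x) (-(3/4)))).
Proof.
  intros Hx.
  assert (Hf : is_derive (fun y => Rpower y (1/4)) (Tz - x) (1/4 * Rpower (Tz - x) (1/4 - 1))).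
  { apply is_derive_Reals. apply derivable_pt_lim_power. lra. }
  assert (Hg : is_derive (fun s => Tz - s) x (-1)).
  { apply is_derive_Reals. 
    replace (-1) with (0 - 1) by ring. apply derivable_pt_lim_minus.
    apply derivable_pt_lim_const. apply derivable_pt_lim_id. }
  pose proof (is_derive_comp _ _ x _ _ Hf Hg) as H.
  replace (1/4 - 1) with (-(3/4)) in H by field.
  match goal with |- is_derive _ _ ?v => replace v with (scal (-1) (1 / 4 * Rpower (Tz - x) (- (3 / 4)))) end.
  exact H. unfold scal; simpl; unfold mult; simpl; ring.
Qed.

Lemma der_G (f : R->R) (c e Tz x d : R) : x < Tz -> is_derive f x d ->
  is_derive (fun s => f s ^2 + c*s - e * Rpower (Tz - s) (1/4)) x
    (2 * f x * d + c + e * (1/4 * Rpower (Tz-x) (-(3/4)))).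
Proof.
  intros Hx Hf.
  apply is_derive_Reals.
  replace (2 * f x * d + c + e * (1/4 * Rpower (Tz-x) (-(3/4)))) with
    ((INR 2 * d * f x ^ Init.Nat.pred 2 + c * 1) - e * (- (1/4 * Rpower (Tz - x) (-(3/4))))).
  2:{ simpl; ring. }
  apply derivable_pt_lim_minus.
  - apply derivable_pt_lim_plus.
    + apply is_derive_Reals. apply (is_derive_pow f 2 x d Hf).
    + apply derivable_pt_lim_scal. apply derivable_pt_lim_id.
  - apply derivable_pt_lim_scal. apply is_derive_Reals. apply deriv_P; auto.
Qed.

Lemma der_opp (f : R -> R) x l : is_derive f x l -> is_derive (fun y => - f y) x (- l).
Proof. intros H. apply is_derive_Reals. apply derivable_pt_lim_opp. apply is_derive_Reals; auto. Qed.

Lemma mono_dec (f df : R -> R) (a b : R) : a <= b ->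
  (forall x, a <= x <= b -> is_derive f x (df x)) ->
  (forall x, a <= x <= b -> df x <= 0) -> f b <= f a.
Proof.
  intros Hab Hd Hp.
  assert (- f a <= - f b); [|lra].
  apply (mono_deriv (fun y => - f y) (fun y => - df y)); auto.
  intros; apply der_opp; auto.
  intros x Hx; specialize (Hp x Hx); lra.
Qed.

Theorem corollary6p7 (n : nat) (r : R -> R -> R) (T : R -> R) (C1 C2 : R) :
  (3 <= n)%nat ->
  mcf_radius_profile n r ->
  extinction_time r T ->
  curvature_decay r C1 C2 ->
  exists R0 : R, forall z t : R,
    z < 0 -> t < T z -> R0 <= r z t ->
    2 * (INR n - 1) * (T z - t) <= (r z t) ^ 2 /\
    (r z t) ^ 2 <= 2 * (INR n - 1) * (T z - t)
                   + 8 * C2 * Rpower (T z - t) (1 / 4) + C1 ^ 2.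
Proof.
  intros Hn Hp He Hc.
  assert (Hk : 2 <= INR n - 1) by (apply le_INR in Hn; simpl in Hn; lra).
  set (k := INR n - 1) in *.
  exists (Rabs C1 + 1). intros z t Hz Ht HR.
  destruct (He z Hz) as [HT0 [Hpos Hlim]].
  set (Tz := T z) in *.
  assert (Hfact : forall s, s < Tz -> 0 < r z s /\ is_derive (fun s => r z s) s (d_t r z s)
      /\ r z s * d_t r z s <= -k /\ r z s * d_t r z s + k >= r z s * d_zz r z s
      /\ s < 0).
  { intros s Hs. assert (Hs0 : s < 0) by lra. pose proof (Hpos s Hs) as Hrs.
    destruct (Hp z s Hs0 Hrs) as [_ [_ [Hex [Heq [_ [Hdt Hzz]]]]]].
    split; auto. split. { unfold d_t. apply Derive_correct; exact Hex. }
    fold k in Heq. rewrite Heq. unfold Rdiv.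
    assert (Hi: 0 < / (1 + d_z r z s ^ 2)) by (apply Rinv_0_lt_compat; nra).
    assert (Hi1: / (1 + d_z r z s ^ 2) <= 1).
    { rewrite <- Rinv_1 at 2. apply Rinv_le_contravar; nra. }
    assert (E : r z s * (d_zz r z s * / (1 + d_z r z s ^ 2) - k * / r z s)
               = r z s * (d_zz r z s * / (1 + d_z r z s ^ 2)) - k) by (field; nra).
    rewrite E.
    assert (A1 : d_zz r z s * / (1 + d_z r z s ^ 2) <= 0) by nra.
    assert (A2 : d_zz r z s * / (1 + d_z r z s ^ 2) >= d_zz r z s) by nra.
    assert (A3 : r z s * (d_zz r z s * / (1 + d_z r z s ^ 2)) <= 0) by nra.
    assert (A4 : r z s * (d_zz r z s * / (1 + d_z r z s ^ 2)) >= r z s * d_zz r z s) by nra.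
    repeat split; lra. }
  assert (Hmono : forall a b, a <= b -> b < Tz -> r z b <= r z a).
  { intros a b Hab Hb.
    apply (mono_dec (fun s => r z s) (fun s => d_t r z s)); auto.
    - intros x Hx. apply Hfact; lra.
    - intros x Hx. destruct (Hfact x ltac:(lra)) as [H1 [_ [H3 _]]]. nra. }
  assert (HL : forall a b, a <= b -> b < Tz -> r z b ^ 2 + 2 * k * b <= r z a ^ 2 + 2 * k * a).
  { intros a b Hab Hb.
    pose proof (mono_dec (fun s => r z s ^ 2 + (2 * k) * s - 0 * Rpower (Tz - s) (1/4))
      (fun s => 2 * r z s * d_t r z s + 2 * k + 0 * (1/4 * Rpower (Tz-s) (-(3/4)))) a b Hab) as H.
    simpl in H. 
    assert (H' : r z b * (r z b * 1) + 2 * k * b - 0 * Rpower (Tz - b) (1 / 4) <=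
       r z a * (r z a * 1) + 2 * k * a - 0 * Rpower (Tz - a) (1 / 4)).
    { apply H.
      - intros x Hx. apply (der_G (fun s => r z s)). lra. apply Hfact; lra.
      - intros x Hx. destruct (Hfact x ltac:(lra)) as [_ [_ [H3 _]]]. lra. }
    simpl. lra. }
  assert (HLB : forall s, s < Tz -> 2 * k * (Tz - s) <= r z s ^ 2).
  { intros s Hs. destruct (Rle_or_lt (2 * k * (Tz - s)) (r z s ^ 2)) as [H|H]; auto.
    exfalso. set (X := 2 * k * (Tz - s) - r z s ^ 2).
    assert (HX : 0 < X) by (unfold X; lra).
    set (d := X / (4 * k)).
    assert (Hd : 0 < d) by (unfold d; apply Rdiv_lt_0_compat; lra).
    assert (Hkd : 2 * k * d = X / 2) by (unfold d; field; lra).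
    set (s2 := Rmax s (Tz - d)).
    assert (s <= s2) by apply Rmax_l.
    assert (Tz - d <= s2) by apply Rmax_r.
    assert (s2 < Tz) by (apply Rmax_lub_lt; lra).
    pose proof (HL s s2 ltac:(lra) ltac:(lra)).
    assert (0 <= r z s2 ^ 2) by nra.
    assert (2 * k * (Tz - d) <= 2 * k * s2) by nra.
    unfold X in *. lra. }
  assert (Hrt : 0 < r z t) by (apply Hpos; auto).
  assert (HC1 : C1 <= r z t) by (pose proof (Rle_abs C1); lra).
  assert (HC2 : 0 <= C2).
  { destruct (Hc z t ltac:(lra) Hrt HC1) as [H1 H2].
    assert (0 < Rpower (r z t) (- (5 / 2))) by (unfold Rpower; apply exp_pos).
    destruct (Hfact t Ht) as [_ [_ [_ [_ _]]]].
    destruct (Rle_or_lt 0 C2); auto.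
    destruct (Hp z t ltac:(lra) Hrt) as [_ [_ [_ [_ [_ [_ Hzz]]]]]]. nra. }
  assert (HU : forall s, t <= s -> s < Tz -> C1 <= r z s ->
     r z t ^ 2 <= r z s ^ 2 + 2 * k * (Tz - t) + 8 * C2 * Rpower (Tz - t) (1 / 4)).
  { intros s Hts Hs HCs.
    pose proof (mono_deriv (fun x => r z x ^ 2 + (2 * k) * x - (8 * C2) * Rpower (Tz - x) (1/4))
      (fun x => 2 * r z x * d_t r z x + 2 * k + (8 * C2) * (1/4 * Rpower (Tz-x) (-(3/4)))) t s Hts) as H.
    assert (H' : r z t ^ 2 + 2 * k * t - 8 * C2 * Rpower (Tz - t) (1 / 4) <=
       r z s ^ 2 + 2 * k * s - 8 * C2 * Rpower (Tz - s) (1 / 4)).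
    { apply H.
      - intros x Hx. apply (der_G (fun y => r z y)). lra. apply Hfact; lra.
      - intros x Hx. destruct (Hfact x ltac:(lra)) as [Hrx [_ [_ [H4 Hx0]]]].
        assert (HCx : C1 <= r z x) by (pose proof (Hmono x s ltac:(lra) Hs); lra).
        destruct (Hc z x Hx0 Hrx HCx) as [H1 H2].
        assert (HLx := HLB x ltac:(lra)).
        assert (Hpi := pow_ineq (r z x) (Tz - x) ltac:(lra) ltac:(nra) Hrx).
        assert (B1 : r z x * d_zz r z x >= - (r z x * (C2 * Rpower (r z x) (- (5 / 2))))).
        { assert (r z x * (- d_zz r z x) <= r z x * (C2 * Rpower (r z x) (- (5 / 2)))).
          { apply Rmult_le_compat_l; lra. }
          lra. }
        assert (B2 : r z x * (C2 * Rpower (r z x) (- (5 / 2))) <= C2 * Rpower (Tz - x) (- (3 / 4))).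
        { replace (r z x * (C2 * Rpower (r z x) (- (5 / 2)))) with (C2 * (r z x * Rpower (r z x) (- (5 / 2)))) by ring.
          apply Rmult_le_compat_l; lra. }
        cbv beta. nra. }
    assert (0 <= Rpower (Tz - s) (1 / 4)) by (unfold Rpower; left; apply exp_pos).
    assert (0 <= 8 * C2 * Rpower (Tz - s) (1 / 4)) by (apply Rmult_le_pos; lra).
    assert (k * s <= k * Tz) by nra.
    lra. }
  split.
  { apply HLB; auto. }
  assert (0 <= C1 ^ 2) by nra.
  destruct (Rle_or_lt C1 0) as [HC|HC].
  - assert (r z t ^ 2 <= 2 * k * (Tz - t) + 8 * C2 * Rpower (Tz - t) (1 / 4)); [|lra].
    apply Rle_plus_epsilon. intros eps Heps.
    destruct (lim_left _ _ Hlim (Rmin 1 eps) ltac:(apply Rmin_glb_lt; lra) t Ht) as [s [Hs Habs]].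
    assert (Hrs : 0 < r z s) by (apply Hpos; lra).
    rewrite Rabs_right in Habs by lra.
    assert (Rmin 1 eps <= 1) by apply Rmin_l.
    assert (Rmin 1 eps <= eps) by apply Rmin_r.
    pose proof (HU s (proj1 Hs) (proj2 Hs) ltac:(lra)).
    assert (r z s ^ 2 <= eps) by nra. lra.
  - destruct (lim_left _ _ Hlim C1 HC t Ht) as [s' [Hs' Habs]].
    assert (Hrs : 0 < r z s') by (apply Hpos; lra).
    rewrite Rabs_right in Habs by lra.
    assert (Hts : t < s').
    { destruct (proj1 Hs') as [Hq|Hq]; auto. subst s'. pose proof (Rle_abs C1). lra. }
    destruct (Ranalysis5.IVT_interv (fun x => C1 - r z x) t s') as [x [Hx Hfx]]; auto.
    + intros a Ha. apply continuity_pt_filterlim. apply (ex_derive_continuous (fun x => C1 - r z x)).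
      exists (- d_t r z a). apply is_derive_Reals. replace (- d_t r z a) with (0 - d_t r z a) by ring.
      apply derivable_pt_lim_minus. apply derivable_pt_lim_const.
      apply is_derive_Reals. apply Hfact; lra.
      pose proof (Rle_abs C1); lra.
    + lra.
    + pose proof (HU x (proj1 Hx) ltac:(lra) ltac:(lra)).
      assert (r z x = C1) by lra. rewrite H1 in H0. lra.
Qed.
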